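(* Let $m\ge 1$, let $S=\{1,\dots,m\}$, and let $\phi:S\times S\to\{+1,-1\}$ be any symmetric function. Then there exist an integer $n\le 2m$ and a map $\sigma:S\to\mathbb{Z}_2^n$, $i\mapsto\sigma_i$, such that for all $i,j\in S$, $$\phi(i,j)=(-1)^{\langle\sigma_i,\sigma_j\rangle_n},$$ where $\langle(i_1,\dots,i_n),(j_1,\dots,j_n)\rangle_n=i_1j_1+\dots+i_nj_n$ (computed mod $2$) is the standard `scalar product' on $\mathbb{Z}_2^n$.
   Context: The function $\phi$ is thought of as a sign rule $y^iy^j=\phi(i,j)y^jy^i$ for generators $y^1,\dots,y^m$ of an associative algebra; the theorem says every such sign rule is of $\mathbb{Z}_2^n$-commutative type for some $n\le 2m$. *)

(* Defs.v *)
From mathcomp Require Import all_boot all_order all_algebra.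
Set Implicit Arguments. Unset Strict Implicit. Unset Printing Implicit Defensive.
Import GRing.Theory.
Local Open Scope ring_scope.

Definition z2dot (n : nat) (u v : 'rV['F_2]_n) : 'F_2 :=
  \sum_(k < n) u 0 k * v 0 k.

Definition z2sign (a : 'F_2) : int := (-1) ^+ (nat_of_ord a).

(* Main.v *)
Require Import Defs.
From mathcomp Require Import all_boot all_order all_algebra.
From mathcomp Require Import zify ring.
Import GRing.Theory.
Local Open Scope ring_scope.
Lemma F2sq (x : 'F_2) : x * x = x.
Proof. by case: x => [[|[|n]] Hn]; apply/val_inj. Qed.

Section Constr.
Variable M : nat.
Definition dot (g h : nat -> 'F_2) : 'F_2 := \sum_(c < 2 * M) g c * h c.
Definition Zc (i x : nat) : bool := if (x < M)%N then (i < x)%N else (i + M < x)%N.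

Lemma dotC g h : dot g h = dot h g.
Proof. by apply: eq_bigr => c _; rewrite mulrC. Qed.
Lemma dotDl g h u : dot (fun x => g x + h x) u = dot g u + dot h u.
Proof. by rewrite /dot -big_split; apply: eq_bigr => c _; rewrite mulrDl. Qed.
Lemma dotd a x u : (x < 2 * M)%N -> dot (fun c => a * (c == x)%:R) u = a * u x.
Proof.
move=> hx; rewrite /dot (bigD1 (Ordinal hx)) //= eqxx mulr1 big1 ?addr0 //.
move=> c /eqP hc; rewrite (_ : (c == x :> nat) = false) ?mulr0 ?mul0r //.
by apply/negbTE/eqP => e; apply: hc; apply/val_inj.
Qed.
Lemma dot0 u : dot (fun _ => 0) u = 0.
Proof. by rewrite /dot big1 // => c _; rewrite mul0r. Qed.

Lemma tau k (f : nat -> nat -> 'F_2) (hk : (k <= M)%N)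
  (Hs : forall i x, (i < k)%N -> Zc i x -> f i x = 0)
  (Hd : forall i, (i < k)%N -> f i i = 1) (c : nat -> 'F_2) :
  exists t, (forall x, (k <= x)%N -> t x = 0) /\ forall j, (j < k)%N -> dot t (f j) = c j.
Proof.
have: (k <= k)%N by [].
elim: {-2}k => [|k' IH] hk'.
  by exists (fun _ => 0); split => // j.
have [t [ht1 ht2]] := IH (ltnW hk').
pose a := c k' - dot t (f k').
exists (fun x => t x + a * (x == k')%:R); split.
  move=> x hx; rewrite ht1 ?(ltnW hx) // (_ : (x == k') = false) ?mulr0 ?addr0 //.
  by apply/negbTE/eqP => e; rewrite e ltnn in hx.
have hk2 : (k' < 2 * M)%N by apply: (leq_trans hk'); apply: (leq_trans hk); rewrite leq_pmull.
move=> j; rewrite ltnS leq_eqVlt => /orP [/eqP ->|hjk]; rewrite dotDl dotd //; last first.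
  by rewrite ht2 // Hs ?mulr0 ?addr0 //; [apply: ltn_trans hk' | rewrite /Zc (leq_trans hk') ].
by rewrite Hd // mulr1 /a addrC subrK.
Qed.

Variable Bn : nat -> nat -> 'F_2.
Hypothesis Bsym : forall i j, Bn i j = Bn j i.

Lemma constr k : (k <= M)%N -> exists f : nat -> nat -> 'F_2,
  [/\ forall i x, (i < k)%N -> Zc i x -> f i x = 0,
      forall i, (i < k)%N -> f i i = 1 &
      forall i j, (i < k)%N -> (j < k)%N -> dot (f i) (f j) = Bn i j].
Proof.
elim: k => [|k IH] hk.
  by exists (fun _ _ => 0); split.
have [f [Hs Hd Hg]] := IH (ltnW hk).
have [t [ht1 ht2]] := tau k f (ltnW hk) Hs Hd (Bn k).
pose y := Bn k k - dot t t - 1.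
pose g := fun x => t x + 1 * (x == k)%:R + y * (x == M + k)%:R.
have hk2 : (k < 2 * M)%N by apply: (leq_trans hk); rewrite leq_pmull // (leq_ltn_trans _ hk).
have hMk : (M + k < 2 * M)%N by rewrite mul2n -addnn ltn_add2l.
have nMk : (M + k == k) = false by apply/negbTE; rewrite -{2}(add0n k) eqn_add2r -lt0n (leq_ltn_trans _ hk).
have gdot u : dot g u = dot t u + u k + y * u (M + k).
  by rewrite /g dotDl dotDl dotd // dotd // mul1r.
have gsj j : (j < k)%N -> dot g (f j) = Bn k j.
  move=> hj; rewrite gdot ht2 // !Hs ?mulr0 ?addr0 //; first by rewrite /Zc ltnNge leq_addr /=; lia.
  by rewrite /Zc (leq_trans hk).
exists (fun i => if i == k then g else f i); split.
- move=> i x; rewrite ltnS leq_eqVlt => /orP [/eqP ->|hi] hz; last first.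
    by rewrite (ltn_eqF hi) Hs.
  have [hkx hxMk] : (k < x)%N /\ (x != M + k).
    by move: hz; rewrite /Zc; case: (ltnP x M) => hxM hz; split; lia.
  rewrite eqxx /g ht1 ?(ltnW hkx) // (gtn_eqF hkx) (negbTE hxMk).
  by rewrite !mulr0 !addr0.
- move=> i; rewrite ltnS leq_eqVlt => /orP [/eqP ->|hi]; last by rewrite (ltn_eqF hi) Hd.
  by rewrite eqxx /g ht1 // add0r eqxx eq_sym nMk mulr0 addr0 mul1r.
- move=> i j; rewrite ltnS leq_eqVlt => /orP [/eqP ->|hi]; rewrite ltnS leq_eqVlt => /orP [/eqP ->|hj].
  + rewrite eqxx.
    have gk : g k = 1 by rewrite /g ht1 // eqxx eq_sym nMk mulr0 addr0 add0r mul1r.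
    have gMk : g (M + k) = y by rewrite /g ht1 ?leq_addl // nMk eqxx mulr0 mulr1 addr0 add0r.
    have dgt : dot g t = dot t t.
      by rewrite gdot (ht1 k) // (ht1 (M + k)) ?leq_addl // mulr0 !addr0.
    rewrite gdot (dotC t g) dgt gk gMk F2sq /y.
    ring.
  + by rewrite eqxx (ltn_eqF hj) gsj.
  + by rewrite eqxx (ltn_eqF hi) dotC gsj // Bsym.
  + by rewrite (ltn_eqF hi) (ltn_eqF hj) Hg.
Qed.
End Constr.

Theorem theorem1 (m : nat) (hm : (1 <= m)%N) (phi : 'I_m -> 'I_m -> int)
  (hphi : forall i j, phi i j = 1 \/ phi i j = -1)
  (hsym : forall i j, phi i j = phi j i) :
  exists (n : nat) (sigma : 'I_m -> 'rV['F_2]_n),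
    (n <= 2 * m)%N /\
    forall i j, phi i j = z2sign (z2dot (sigma i) (sigma j)).
Proof.
case: m hm phi hphi hsym => [//|m'] _ phi hphi hsym.
pose Bn (i j : nat) : 'F_2 := if phi (inord i) (inord j) == 1 then 0 else 1.
have Bsym i j : Bn i j = Bn j i by rewrite /Bn hsym.
have [f [_ _ Hg]] := @constr m'.+1 Bn Bsym m'.+1 (leqnn m'.+1).
exists (2 * m'.+1)%N, (fun i => \row_(c < 2 * m'.+1) f i c); split => // i j.
have -> : z2dot (\row_(c < 2 * m'.+1) f i c) (\row_(c < 2 * m'.+1) f j c) = dot m'.+1 (f i) (f j).
  by apply: eq_bigr => c _; rewrite !mxE.
rewrite Hg // /Bn !inord_val.
by case: (hphi i j) => ->; rewrite ?eqxx //.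
Qed.
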